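(* For every WS-HSA scheme, and every $u\in[U]$, $m\in[M]$, $n\in[N]$ with $\mathcal S_m\cap\mathcal T_n=\emptyset$ and $|(\mathcal S_m\cap\mathcal K_u)\cup\mathcal T_n|\le K-1$: (a) $H\big(\{Z_{i,j}\}_{(i,j)\in\mathcal S_m\cap\mathcal K_u}\mid\{Z_{i,j}\}_{(i,j)\in\mathcal T_n}\big)\ge|\mathcal S_m\cap\mathcal K_u|\,L$; (b) $H\big(\{Z_{i,j}\}_{(i,j)\in\mathcal K_{\mathcal U^{(m,n)}}}\mid\{Z_{i,j}\}_{(i,j)\in\mathcal T_n}\big)\ge(|\mathcal U^{(m,n)}|-1)L$ if $|\mathcal K_{\mathcal U^{(m,n)}}\cup\mathcal T_n|=K$, and $\ge|\mathcal U^{(m,n)}|\,L$ otherwise.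
   Context: Setup. Fix integers $U\ge 2$ and $V_1,\dots,V_U\ge 1$. Users are pairs $(u,v)$ with $u\in[U]$, $v\in[V_u]$; $\mathcal K_u=\{(u,v):v\in[V_u]\}$, $\mathcal K=\bigcup_u\mathcal K_u$, $K=|\mathcal K|$; for $\mathcal U\subseteq[U]$, $\mathcal K_{\mathcal U}=\bigcup_{u\in\mathcal U}\mathcal K_u$. Given are a family $\{\mathcal S_1,\dots,\mathcal S_M\}$ of subsets of $\mathcal K$ (security input sets) and a family $\{\mathcal T_1,\dots,\mathcal T_N\}$ of subsets of $\mathcal K$ (collusion sets), both closed under taking subsets. $\mathcal U^{(m,n)}=\{u\in[U]:\mathcal S_m\cap\mathcal K_u\ne\emptyset,\ \mathcal K_u\subseteq\mathcal S_m\cup\mathcal T_n\}$. A WS-HSA scheme with input length $L$ over a finite field $\mathbb F_q$ consists of jointly distributed random variables: inputs $W_{u,v}$, each uniform on $\mathbb F_q^L$; a source key $Z_\Sigma$; individual keys $Z_{u,v}$; messages $X_{u,v}$ and $Y_u$; entropies in base $q$. They satisfy: (i) $H(\{W_{u,v}\}_{\mathcal K},\{Z_{u,v}\}_{\mathcal K})=\sum_{\mathcal K}H(W_{u,v})+H(\{Z_{u,v}\}_{\mathcal K})$; (ii) $H(\{Z_{u,v}\}_{\mathcal K}\mid Z_\Sigma)=0$; (iii) $H(X_{u,v}\mid W_{u,v},Z_{u,v})=0$; (iv) $H(Y_u\mid\{X_{u,v}\}_{v\in[V_u]})=0$; (v) $H(\sum_{\mathcal K}W_{u,v}\mid Y_1,\dots,Y_U)=0$;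 (vi) $I(Y_1,\dots,Y_U;\{W_{u,v}\}_{\mathcal S_m}\mid\sum_{\mathcal K}W_{u,v},\{W_{i,j},Z_{i,j}\}_{\mathcal T_n})=0$ for all $m,n$; (vii) $I(\{X_{u,v}\}_{v\in[V_u]};\{W_{i,j}\}_{\mathcal S_m}\mid\{W_{i,j},Z_{i,j}\}_{\mathcal T_n})=0$ for all $u,m,n$. *)

(* Defs.v *)
From HB Require Import structures.
From mathcomp Require Import all_boot all_order all_algebra.
From mathcomp Require Import reals exp.
Set Implicit Arguments. Unset Strict Implicit. Unset Printing Implicit Defensive.
Import Order.TTheory GRing.Theory Num.Theory.
Local Open Scope ring_scope.

Definition is_prob (R : realType) (Omega : finType) (P : Omega -> R) :=
  (forall w, 0 <= P w) /\ \sum_(w : Omega) P w = 1.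

Definition prob_eq (R : realType) (Omega : finType) (P : Omega -> R)
  (T : finType) (X : Omega -> T) (t : T) : R :=
  \sum_(w : Omega | X w == t) P w.

(* Shannon entropy in base b (0 log 0 = 0 since the term is multiplied by 0). *)
Definition entropy (R : realType) (b : R) (Omega : finType) (P : Omega -> R)
  (T : finType) (X : Omega -> T) : R :=
  - \sum_(t : T) prob_eq P X t * (ln (prob_eq P X t) / ln b).

Definition jointRV (Omega T1 T2 : Type) (X1 : Omega -> T1) (X2 : Omega -> T2) :
  Omega -> T1 * T2 := fun w => (X1 w, X2 w).

Definition coll (Omega : Type) (I : finType) (T : Type) (A : {set I})
  (f : I -> Omega -> T) : Omega -> {ffun I -> option T} :=
  fun w => [ffun i => if i \in A then Some (f i w) else None].

Definition centropy (R : realType) (b : R) (Omega : finType) (P : Omega -> R)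
  (T1 T2 : finType) (X : Omega -> T1) (Y : Omega -> T2) : R :=
  entropy b P (jointRV X Y) - entropy b P Y.

Definition cmutinfo (R : realType) (b : R) (Omega : finType) (P : Omega -> R)
  (T1 T2 T3 : finType) (X : Omega -> T1) (Y : Omega -> T2) (Z : Omega -> T3) : R :=
  centropy b P X Z - centropy b P X (jointRV Y Z).

Definition user (U : nat) (V : 'I_U -> nat) : finType :=
  {u : 'I_U & 'I_(V u)}.

Definition Kset (U : nat) (V : 'I_U -> nat) (u : 'I_U) : {set user V} :=
  [set k : user V | tag k == u].

Definition Uset (U : nat) (V : 'I_U -> nat) (Sm Tn : {set user V}) : {set 'I_U} :=
  [set u : 'I_U | (Sm :&: Kset V u != set0) && (Kset V u \subset Sm :|: Tn)].

Definition KUset (U : nat) (V : 'I_U -> nat) (Us : {set 'I_U}) : {set user V} :=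
  \bigcup_(u in Us) Kset V u.

Definition subset_closed (I : finType) (M : nat) (S : 'I_M -> {set I}) :=
  forall m (A : {set I}), A \subset S m -> exists m', S m' = A.

(* WS-HSA scheme conditions (i)-(vii), entropies in base q = #|F|. *)
Definition WS_HSA (R : realType) (Omega : finType) (P : Omega -> R)
  (F : finFieldType) (L U : nat) (V : 'I_U -> nat)
  (M N : nat) (S : 'I_M -> {set user V}) (T : 'I_N -> {set user V})
  (TZS TZ TX TY : finType)
  (W : user V -> Omega -> 'rV[F]_L) (ZS : Omega -> TZS)
  (Z : user V -> Omega -> TZ) (X : user V -> Omega -> TX)
  (Y : 'I_U -> Omega -> TY) : Prop :=
  let q : R := #|F|%:R in
  let H := @entropy R q Omega P in
  let CH := @centropy R q Omega P in
  let MI := @cmutinfo R q Omega P in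
  let Wsum := fun w => \sum_(k : user V) W k w in
  is_prob P /\
      (forall k x, prob_eq P (W k) x = ((#|F| ^ L)%N%:R)^-1) /\
      H _ (jointRV (coll setT W) (coll setT Z)) =
        \sum_(k : user V) H _ (W k) + H _ (coll setT Z) /\
      CH _ _ (coll setT Z) ZS = 0 /\
      (forall k, CH _ _ (X k) (jointRV (W k) (Z k)) = 0) /\
      (forall u, CH _ _ (Y u) (coll (Kset V u) X) = 0) /\
      CH _ _ Wsum (coll setT Y) = 0 /\
      (forall m n, MI _ _ _ (coll setT Y) (coll (S m) W)
          (jointRV Wsum (jointRV (coll (T n) W) (coll (T n) Z))) = 0) /\
      (forall u m n, MI _ _ _ (coll (Kset V u) X) (coll (S m) W)
          (jointRV (coll (T n) W) (coll (T n) Z)) = 0).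

(* Main.v *)
Require Import Defs.
From HB Require Import structures.
From mathcomp Require Import all_boot all_order all_algebra.
From mathcomp Require Import reals exp.
From mathcomp.algebra_tactics Require Import ring lra.
Set Implicit Arguments. Unset Strict Implicit. Unset Printing Implicit Defensive.
Import Order.TTheory GRing.Theory Num.Theory.
Local Open Scope ring_scope.

Definition dep (Omega : Type) (T1 T2 : Type) (X : Omega -> T1) (Y : Omega -> T2) :=
  forall w w', Y w = Y w' -> X w = X w'.

Section Ent.
Variables (R : realType) (Omega : finType) (P : Omega -> R) (q : R).
Hypothesis hP : is_prob P.
Hypothesis hq : 1 < q.

Definition pf (T : finType) (X : Omega -> T) w := prob_eq P X (X w).
Local Notation h := (entropy q P).

Lemma P_ge0 w : 0 <= P w. Proof. by case: hP. Qed.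
Lemma sumP1 : \sum_w P w = 1. Proof. by case: hP. Qed.
Lemma lnq_gt0 : 0 < ln q. Proof. exact: ln_gt0. Qed.

Lemma sum_fiber (T : finType) (X : Omega -> T) (f : T -> R) :
  \sum_w P w * f (X w) = \sum_t prob_eq P X t * f t.
Proof.
rewrite (partition_big X xpredT) //=; apply: eq_bigr => t _.
rewrite /prob_eq big_distrl /=; apply: eq_big => // w /eqP -> //.
Qed.

Lemma sum_prob_eq (T : finType) (X : Omega -> T) : \sum_t prob_eq P X t = 1.
Proof.
have H := sum_fiber X (fun _ => 1); rewrite -sumP1.
under eq_bigr do rewrite -[prob_eq _ _ _]mulr1.
by rewrite -H; apply: eq_bigr => w _; rewrite mulr1.
Qed.

Lemma prob_eq_ge0 (T : finType) (X : Omega -> T) t : 0 <= prob_eq P X t.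
Proof. by apply: sumr_ge0 => w _; apply: P_ge0. Qed.

Lemma pf_geP (T : finType) (X : Omega -> T) w : P w <= pf X w.
Proof.
rewrite /pf /prob_eq (bigD1 w) //= lerDl; apply: sumr_ge0 => *; exact: P_ge0.
Qed.

Lemma pf_le1 (T : finType) (X : Omega -> T) w : pf X w <= 1.
Proof.
rewrite -sumP1 /pf /prob_eq [X in _ <= X](bigID (fun w' => X w' == X w)) /= lerDl.
apply: sumr_ge0 => *; exact: P_ge0.
Qed.

Lemma entropyE (T : finType) (X : Omega -> T) :
  h X = - (\sum_w P w * ln (pf X w)) / ln q.
Proof.
rewrite /entropy /pf (sum_fiber X (fun t => ln (prob_eq P X t))).
by rewrite mulNr big_distrl /=; congr (- _); apply: eq_bigr => t _; rewrite mulrA.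
Qed.

Lemma pf_mono (T1 T2 : finType) (X : Omega -> T1) (Y : Omega -> T2) w :
  dep X Y -> pf Y w <= pf X w.
Proof.
move=> dXY; rewrite /pf /prob_eq [X in X <= _]big_mkcond [X in _ <= X]big_mkcond /=.
apply: ler_sum => w' _; case: eqP => [/dXY ->|_]; rewrite ?eqxx //.
by case: ifP => _ //; exact: P_ge0.
Qed.

Lemma h_mono (T1 T2 : finType) (X : Omega -> T1) (Y : Omega -> T2) :
  dep X Y -> h X <= h Y.
Proof.
move=> dXY; rewrite !entropyE !mulNr lerN2 ler_pM2r ?invr_gt0 ?lnq_gt0 //.
apply: ler_sum => w _; have := P_ge0 w; rewrite le0r => /orP[/eqP->|Pw].
  by rewrite !mul0r.
have pY := lt_le_trans Pw (pf_geP Y w).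
apply: ler_wpM2l; first exact: ltW. rewrite ler_ln ?posrE //; first exact: pf_mono.
exact: lt_le_trans pY (pf_mono w dXY).
Qed.

Lemma h_eq (T1 T2 : finType) (X : Omega -> T1) (Y : Omega -> T2) :
  dep X Y -> dep Y X -> h X = h Y.
Proof. by move=> ??; apply/eqP; rewrite eq_le !h_mono. Qed.

Lemma h_ge0 (T : finType) (X : Omega -> T) : 0 <= h X.
Proof.
rewrite entropyE mulNr oppr_ge0 pmulr_lle0 ?invr_gt0 ?lnq_gt0 //.
apply: sumr_le0 => w _; apply: mulr_ge0_le0; first exact: P_ge0.
exact/ln_le0/pf_le1.
Qed.

Lemma h_const (T : finType) (X : Omega -> T) : (forall w w', X w = X w') -> h X = 0.
Proof.
move=> cX; rewrite entropyE; have -> : \sum_w P w * ln (pf X w) = 0.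
  apply: big1 => w _; rewrite /pf /prob_eq.
  rewrite (eq_bigl xpredT) ?sumP1 ?ln1 ?mulr0 // => w'; by rewrite (cX w' w) eqxx.
by rewrite oppr0 mul0r.
Qed.


Lemma pfE (T : finType) (X : Omega -> T) w :
  pf X w = \sum_w1 ((X w1 == X w)%:R * P w1).
Proof.
rewrite /pf /prob_eq big_mkcond /=; apply: eq_bigr => w1 _.
by case: eqP; rewrite ?mul1r ?mul0r.
Qed.

Lemma pf_ge0 (T : finType) (X : Omega -> T) w : 0 <= pf X w.
Proof. exact: le_trans (P_ge0 w) (pf_geP X w). Qed.

Lemma pf_eq (T : finType) (X : Omega -> T) w w' : X w = X w' -> pf X w = pf X w'.
Proof. by rewrite /pf => ->. Qed.

Section Submod.
Variables (TA TB TC TD : finType) (A : Omega -> TA) (B : Omega -> TB)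
  (C : Omega -> TC) (D : Omega -> TD).
Hypotheses (dBA : dep B A) (dCA : dep C A)
  (jA : forall w w', B w = B w' -> C w = C w' -> A w = A w')
  (dDB : dep D B) (dDC : dep D C).

Let g w := P w / (pf A w * pf D w).

Lemma inner_bound w1 w2 :
  \sum_w ((B w1 == B w)%:R * (C w2 == C w)%:R * g w) <= (D w2 == D w1)%:R / pf D w1.
Proof.
case: (pickP (fun w => (B w1 == B w) && (C w2 == C w))) => [w0 /andP[/eqP e1 /eqP e2] | none].
  have eD : D w2 = D w1 by rewrite (dDB e1) (dDC e2).
  rewrite eD eqxx mul1r.
  have -> : \sum_w ((B w1 == B w)%:R * (C w2 == C w)%:R * g w)
      = (\sum_w ((A w == A w0)%:R * P w)) / (pf A w0 * pf D w1).
    rewrite big_distrl /=; apply: eq_bigr => w _.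
    case: (boolP ((B w1 == B w) && (C w2 == C w))) => [/andP[/eqP f1 /eqP f2]|].
      rewrite f1 f2 !eqxx.
      have eAw : A w = A w0 by apply: jA; [rewrite -f1 e1 | rewrite -f2 e2].
      rewrite eAw eqxx /g (pf_eq eAw) (@pf_eq _ D w w1); first by rewrite !mul1r.
      exact: dDB (esym f1).
    move=> nBC.
    have -> : (B w1 == B w)%:R * (C w2 == C w)%:R = 0 :> R.
      by move: nBC; case: (B w1 == B w); case: (C w2 == C w); rewrite ?mul0r ?mulr0.
    case: (A w =P A w0) => [eAw|_]; last by rewrite !mul0r.
    by move: nBC; rewrite (dBA eAw) (dCA eAw) -e1 -e2 !eqxx.
  rewrite -(pfE A w0) invfM mulrA.
  have [->|nz] := eqVneq (pf A w0) 0; first by rewrite !mul0r invr_ge0 pf_ge0.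
  by rewrite mulfV // mul1r.
rewrite big1 ?mulr_ge0 ?invr_ge0 ?pf_ge0 ?ler0n // => w _.
by move: (none w); case: (B w1 == B w); case: (C w2 == C w) => //= _; rewrite ?(mul0r, mulr0, mul1r).
Qed.

Lemma sum_r_le1 :
  \sum_w P w * (pf B w * pf C w / (pf A w * pf D w)) <= 1.
Proof.
have E : forall w, P w * (pf B w * pf C w / (pf A w * pf D w)) =
   \sum_w1 \sum_w2 ((P w1 * P w2) * ((B w1 == B w)%:R * (C w2 == C w)%:R * g w)).
  move=> w; rewrite (pfE B) (pfE C) /g.
  have -> : forall x y : R, P w * (x * y / (pf A w * pf D w)) =
     x * (y * (P w / (pf A w * pf D w)))  by move=> x y; rewrite /=; ring.
  rewrite big_distrl /=; apply: eq_bigr => w1 _.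
  rewrite big_distrl big_distrr /=; apply: eq_bigr => w2 _; rewrite /g; ring.
under eq_bigr do rewrite E.
rewrite exchange_big /=.
under eq_bigr do rewrite exchange_big /=.
apply: (@le_trans _ _ (\sum_w1 \sum_w2 ((P w1 * P w2) * ((D w2 == D w1)%:R / pf D w1)))).
  apply: ler_sum => w1 _; apply: ler_sum => w2 _.
  rewrite -big_distrr /=; apply: ler_wpM2l; first by rewrite mulr_ge0 ?P_ge0.
  exact: inner_bound.
rewrite -[X in _ <= X]sumP1; apply: ler_sum => w1 _.
have -> : \sum_w2 (P w1 * P w2 * ((D w2 == D w1)%:R / pf D w1))
   = P w1 / pf D w1 * pf D w1.
  rewrite (pfE D w1) big_distrr /=; apply: eq_bigr => w2 _; ring.
have [->|nz] := eqVneq (pf D w1) 0; first by rewrite mulr0 P_ge0.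
by rewrite divfK.
Qed.

Lemma submod : entropy q P A + entropy q P D <= entropy q P B + entropy q P C.
Proof.
have key : \sum_w P w * (ln (pf B w) + ln (pf C w) - ln (pf A w) - ln (pf D w)) <= 0.
  apply: (@le_trans _ _ (\sum_w (P w * (pf B w * pf C w / (pf A w * pf D w)) - P w))).
    apply: ler_sum => w _; have := P_ge0 w; rewrite le0r => /orP[/eqP->|Pw].
      by rewrite !mul0r subr0.
    have pB := lt_le_trans Pw (pf_geP B w).
    have pC := lt_le_trans Pw (pf_geP C w).
    have pA := lt_le_trans Pw (pf_geP A w).
    have pD := lt_le_trans Pw (pf_geP D w).
    set r := pf B w * pf C w / (pf A w * pf D w).
    have r0 : 0 < r by rewrite /r divr_gt0 ?mulr_gt0.
    have -> : ln (pf B w) + ln (pf C w) - ln (pf A w) - ln (pf D w) = ln r.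
      rewrite /r ln_div ?lnM ?posrE ?mulr_gt0 //; ring.
    have -> : P w * r - P w = P w * (r - 1) by ring.
    apply: ler_wpM2l; first exact: ltW.
    have := @le_ln1Dx _ (r - 1); rewrite addrCA subrr addr0; apply.
    lra.
  rewrite sumrB sumP1 subr_le0; exact: sum_r_le1.
rewrite !entropyE.
set sA := \sum_w _ * ln (pf A w). set sB := \sum_w _ * ln (pf B w).
set sC := \sum_w _ * ln (pf C w). set sD := \sum_w _ * ln (pf D w).
have ek : \sum_w P w * (ln (pf B w) + ln (pf C w) - ln (pf A w) - ln (pf D w))
   = sB + sC - sA - sD.
  rewrite /sA /sB /sC /sD -big_split -!sumrB /=; apply: eq_bigr => w _; ring.
rewrite ek in key.
have il : 0 < (ln q)^-1 by rewrite invr_gt0 lnq_gt0.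
rewrite -subr_le0.
have -> : - sA / ln q + - sD / ln q - (- sB / ln q + - sC / ln q)
   = (sB + sC - sA - sD) * (ln q)^-1 by ring.
by rewrite pmulr_lle0.
Qed.

End Submod.

Lemma ln_le_sub1 (x : R) : 0 < x -> ln x <= x - 1.
Proof.
move=> x0; have := @le_ln1Dx _ (x - 1); rewrite addrCA subrr addr0; apply; lra.
Qed.

Lemma omega_inhab : exists w : Omega, true.
Proof.
case: (pickP (fun _ : Omega => true)) => [w _|H]; first by exists w.
by have := sumP1; rewrite big_pred0 // => /eqP; rewrite eq_sym oner_eq0.
Qed.

Lemma card_gt0_rv (T : finType) (X : Omega -> T) : (0 < #|T|)%N.
Proof. by have [w _] := omega_inhab; apply/card_gt0P; exists (X w). Qed.

Lemma h_le_card (T : finType) (X : Omega -> T) :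
  entropy q P X <= ln (#|T|%:R) / ln q.
Proof.
have N0 : 0 < (#|T|%:R : R) by rewrite ltr0n card_gt0_rv.
set N := (#|T|%:R : R) in N0 *.
rewrite /entropy.
have -> : - (\sum_t prob_eq P X t * (ln (prob_eq P X t) / ln q))
   = (- \sum_t prob_eq P X t * ln (prob_eq P X t)) / ln q.
  by rewrite mulNr big_distrl /=; congr (- _); apply: eq_bigr => t _; rewrite mulrA.
rewrite ler_pM2r ?invr_gt0 ?lnq_gt0 //.
have key : \sum_t (- (prob_eq P X t * ln (prob_eq P X t)) - prob_eq P X t * ln N)
   <= \sum_t (N^-1 - prob_eq P X t).
  apply: ler_sum => t _; set p := prob_eq P X t.
  have := prob_eq_ge0 X t; rewrite -/p le0r => /orP[/eqP->|p0].
    rewrite !mul0r !subr0 oppr0 invr_ge0; exact: ltW.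
  have -> : - (p * ln p) - p * ln N = p * ln ((N * p)^-1).
    rewrite lnV ?posrE ?mulr_gt0 // lnM ?posrE //; ring.
  have -> : N^-1 - p = p * ((N * p)^-1 - 1).
    by field; rewrite gt_eqF // gt_eqF.
  apply: ler_wpM2l; first exact: ltW.
  by apply: ln_le_sub1; rewrite invr_gt0 mulr_gt0.
rewrite sumrB sumrB sumr_const -big_distrl /= sum_prob_eq mul1r sumrN in key.
have E : (N^-1 *+ #|T| : R) = 1 by rewrite -mulr_natr mulVf ?gt_eqF.
rewrite E in key; lra.
Qed.

Lemma h_uniform (T : finType) (X : Omega -> T) :
  (forall t, prob_eq P X t = (#|T|%:R)^-1) -> entropy q P X = ln (#|T|%:R) / ln q.
Proof.
move=> uX; have N0 : 0 < (#|T|%:R : R) by rewrite ltr0n card_gt0_rv.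
rewrite /entropy; under eq_bigr do rewrite uX.
rewrite sumr_const -mulr_natr lnV ?posrE ?mul1r //.
have := lnq_gt0 => lq; field; rewrite !gt_eqF //.
Qed.

End Ent.

Ltac depT := let w := fresh "w" in let w' := fresh "w'" in let H := fresh "H" in
  intros w w' H; rewrite /jointRV in H *; injection H; intros; congruence.

Section Dep.
Variable Omega : Type.
Lemma dep_refl T (X : Omega -> T) : dep X X. Proof. by move=> ?? ->. Qed.
Lemma dep_trans T1 T2 T3 (X : Omega -> T1) (Y : Omega -> T2) (Z : Omega -> T3) :
  dep X Y -> dep Y Z -> dep X Z.
Proof. by move=> dXY dYZ w w' /dYZ /dXY. Qed.
Lemma dep_jl T1 T2 (X : Omega -> T1) (Y : Omega -> T2) : dep X (jointRV X Y).
Proof. by move=> w w' [->]. Qed.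
Lemma dep_jr T1 T2 (X : Omega -> T1) (Y : Omega -> T2) : dep Y (jointRV X Y).
Proof. by move=> w w' [_ ->]. Qed.
Lemma dep_joint T1 T2 T3 (X : Omega -> T1) (Y : Omega -> T2) (Z : Omega -> T3) :
  dep X Z -> dep Y Z -> dep (jointRV X Y) Z.
Proof. by move=> dX dY w w' e; rewrite /jointRV (dX _ _ e) (dY _ _ e). Qed.
Lemma dep_const T1 T2 (X : Omega -> T1) (Y : Omega -> T2) :
  (forall w w', X w = X w') -> dep X Y.
Proof. by move=> cX w w' _. Qed.

Variables (I : finType) (T : Type).
Lemma coll_eqP (A : {set I}) (f : I -> Omega -> T) w w' :
  coll A f w = coll A f w' -> forall i, i \in A -> f i w = f i w'.
Proof.
by move=> e i iA; move/ffunP/(_ i): e; rewrite !ffunE iA => -[].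
Qed.
Lemma dep_coll_elem (A : {set I}) (f : I -> Omega -> T) i :
  i \in A -> dep (f i) (coll A f).
Proof. by move=> iA w w' /coll_eqP; apply. Qed.
Lemma dep_coll T2 (A : {set I}) (f : I -> Omega -> T) (Y : Omega -> T2) :
  (forall i, i \in A -> dep (f i) Y) -> dep (coll A f) Y.
Proof.
move=> H w w' e; apply/ffunP => i; rewrite !ffunE.
by case: ifP => // iA; rewrite (H i iA _ _ e).
Qed.
Lemma dep_coll_sub (A B : {set I}) (f : I -> Omega -> T) :
  A \subset B -> dep (coll A f) (coll B f).
Proof.
by move=> /subsetP sAB; apply: dep_coll => i iA; apply: dep_coll_elem; apply: sAB.
Qed.
End Dep.

Section Shannon.
Variables (R : realType) (Omega : finType) (P : Omega -> R) (q : R).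
Hypothesis hP : is_prob P.
Hypothesis hq : 1 < q.
Local Notation h := (entropy q P).
Local Notation ch := (centropy q P).
Local Notation cmi := (cmutinfo q P).

Definition cst (w : Omega) : unit := tt.

Lemma h_cst : h cst = 0. Proof. exact: h_const. Qed.

Lemma ch_ge0 (T1 T2 : finType) (X : Omega -> T1) (Y : Omega -> T2) : 0 <= ch X Y.
Proof. by rewrite /centropy subr_ge0; apply: h_mono => //; exact: dep_jr. Qed.

Lemma h_sub (T1 T2 : finType) (X : Omega -> T1) (Y : Omega -> T2) :
  h (jointRV X Y) <= h X + h Y.
Proof.
have := @submod _ _ _ _ hP hq _ _ _ _ (jointRV X Y) X Y cst.
rewrite h_cst addr0; apply.
- exact: dep_jl.
- exact: dep_jr.
- by move=> w w' e1 e2; rewrite /jointRV e1 e2.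
- exact: dep_const.
- exact: dep_const.
Qed.

Lemma ch_le_h (T1 T2 : finType) (X : Omega -> T1) (Y : Omega -> T2) : ch X Y <= h X.
Proof. rewrite /centropy; have := h_sub X Y; lra. Qed.

Lemma ch_mono_cond (T1 T2 T3 : finType) (X : Omega -> T1) (Y : Omega -> T2)
   (Y' : Omega -> T3) : dep Y Y' -> ch X Y' <= ch X Y.
Proof.
move=> dY; rewrite /centropy.
have HS : h (jointRV X Y') + h Y <= h (jointRV X Y) + h Y'.
  apply: (@submod _ _ _ _ hP hq _ _ _ _ (jointRV X Y') (jointRV X Y) Y' Y).
  - by apply: dep_joint; [exact: dep_jl| exact: (dep_trans dY (@dep_jr _ _ _ X Y'))].
  - exact: dep_jr.
  - by move=> w w' [e1 _] e2; rewrite /jointRV e1 e2.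
  - exact: dep_jr.
  - exact: dY.
lra.
Qed.

Lemma ch_mono_left (T1 T2 T3 : finType) (X : Omega -> T1) (X' : Omega -> T3)
   (Y : Omega -> T2) : dep X X' -> ch X Y <= ch X' Y.
Proof.
move=> dX; rewrite /centropy lerD2r; apply: h_mono => //.
by apply: dep_joint; [exact: (dep_trans dX (@dep_jl _ _ _ X' Y))| exact: dep_jr].
Qed.

Lemma ch_eqv (T1 T2 T3 T4 : finType) (X : Omega -> T1) (X' : Omega -> T3)
   (Y : Omega -> T2) (Y' : Omega -> T4) :
  dep X X' -> dep X' X -> dep Y Y' -> dep Y' Y -> ch X Y = ch X' Y'.
Proof.
move=> d1 d2 d3 d4; rewrite /centropy (@h_eq _ _ _ _ hP hq _ _ Y Y') //.
congr (_ - _); apply: h_eq => //; apply: dep_joint.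
- exact: (dep_trans d1 (@dep_jl _ _ _ X' Y')).
- exact: (dep_trans d3 (@dep_jr _ _ _ X' Y')).
- exact: (dep_trans d2 (@dep_jl _ _ _ X Y)).
- exact: (dep_trans d4 (@dep_jr _ _ _ X Y)).
Qed.

Lemma det_dep (T1 T2 : finType) (X : Omega -> T1) (Y : Omega -> T2) :
  dep X Y -> ch X Y = 0.
Proof.
move=> d; rewrite /centropy (@h_eq _ _ _ _ hP hq _ _ (jointRV X Y) Y) ?subrr //.
  by apply: dep_joint => //; exact: dep_refl.
exact: dep_jr.
Qed.

Lemma ch_det_cond (T1 T2 T3 : finType) (X : Omega -> T1) (G : Omega -> T2)
   (Rr : Omega -> T3) : ch G Rr = 0 -> ch X Rr <= ch X G.
Proof.
move=> d.
have h1 := ch_mono_cond X (@dep_jl _ _ _ G Rr).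
have h2 : h (jointRV X Rr) <= h (jointRV X (jointRV G Rr)).
  apply: h_mono => //; apply: dep_joint; first exact: dep_jl.
  exact: (dep_trans (@dep_jr _ _ _ G Rr) (@dep_jr _ _ _ X (jointRV G Rr))).
move: h1 h2 d; rewrite /centropy; lra.
Qed.

Lemma det_mono (T1 T2 T3 : finType) (G : Omega -> T1) (Rr : Omega -> T2)
   (S : Omega -> T3) : ch G Rr = 0 -> dep Rr S -> ch G S = 0.
Proof.
move=> d dRS; apply/eqP; rewrite eq_le ch_ge0 andbT -d; exact: ch_mono_cond.
Qed.

Lemma det_joint (T1 T2 T3 : finType) (G1 : Omega -> T1) (G2 : Omega -> T2)
   (Rr : Omega -> T3) : ch G1 Rr = 0 -> ch G2 Rr = 0 -> ch (jointRV G1 G2) Rr = 0.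
Proof.
move=> d1 d2; apply/eqP; rewrite eq_le ch_ge0 andbT.
have HS : h (jointRV (jointRV G1 G2) Rr) + h Rr <= h (jointRV G1 Rr) + h (jointRV G2 Rr).
  apply: (@submod _ _ _ _ hP hq _ _ _ _ (jointRV (jointRV G1 G2) Rr)
    (jointRV G1 Rr) (jointRV G2 Rr) Rr); depT.
move: d1 d2 HS; rewrite /centropy; lra.
Qed.

Lemma det_trans (T1 T2 T3 : finType) (G : Omega -> T1) (Rr : Omega -> T2)
   (S : Omega -> T3) : ch G Rr = 0 -> ch Rr S = 0 -> ch G S = 0.
Proof.
move=> d1 d2; apply/eqP; rewrite eq_le ch_ge0 andbT.
have HS : h (jointRV G (jointRV Rr S)) + h Rr <= h (jointRV G Rr) + h (jointRV Rr S).
  apply: (@submod _ _ _ _ hP hq _ _ _ _ (jointRV G (jointRV Rr S))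
    (jointRV G Rr) (jointRV Rr S) Rr); depT.
have m : h (jointRV G S) <= h (jointRV G (jointRV Rr S)).
  by apply: h_mono => //; depT.
move: d1 d2 m HS; rewrite /centropy; lra.
Qed.

Lemma ch_det_left (T1 T2 T3 : finType) (X : Omega -> T1) (G : Omega -> T2)
   (Y : Omega -> T3) : ch X (jointRV G Y) = 0 -> ch X Y <= ch G Y.
Proof.
move=> d; have m : h (jointRV X Y) <= h (jointRV X (jointRV G Y)).
  by apply: h_mono => //; depT.
move: d m; rewrite /centropy; lra.
Qed.

Lemma det_coll (I : finType) (T1 T2 : finType) (A : {set I}) (f : I -> Omega -> T1)
   (Rr : Omega -> T2) : (forall i, i \in A -> ch (f i) Rr = 0) -> ch (coll A f) Rr = 0.
Proof.
move: {2}#|A| (erefl #|A|) => n; elim: n A => [|n IH] A cA H.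
  apply: det_dep; apply: dep_const => w w'; apply/ffunP => i; rewrite !ffunE.
  by move/eqP: cA; rewrite cards_eq0 => /eqP ->; rewrite inE.
have [a aA] : exists a, a \in A.
  by apply/set0Pn; rewrite -card_gt0 cA.
have -> : ch (coll A f) Rr = ch (jointRV (coll (A :\ a) f) (f a)) Rr.
  apply: ch_eqv; try exact: dep_refl.
  - apply: dep_coll => i iA; case: (i =P a) => [->|ne]; first exact: dep_jr.
    apply: (dep_trans _ (@dep_jl _ _ _ (coll (A :\ a) f) (f a))); apply: dep_coll_elem; by rewrite !inE iA andbT; apply/eqP.
  - apply: dep_joint; last exact: dep_coll_elem.
    by apply: dep_coll_sub; apply: subD1set.
apply: det_joint; last exact: H.
apply: IH; first by rewrite (cardsD1 a A) aA in cA; case: cA.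
by move=> i; rewrite !inE => /andP[_]; apply: H.
Qed.

Lemma cmi_ge0 (T1 T2 T3 : finType) (X : Omega -> T1) (Y : Omega -> T2) (Z : Omega -> T3) :
  0 <= cmi X Y Z.
Proof. by rewrite /cmutinfo subr_ge0; apply: ch_mono_cond; exact: dep_jr. Qed.

Lemma cmi_dp (T1 T2 T3 T4 : finType) (G : Omega -> T1) (G' : Omega -> T4)
  (Y : Omega -> T2) (Z : Omega -> T3) : dep G G' -> cmi G Y Z <= cmi G' Y Z.
Proof.
move=> dG; rewrite /cmutinfo /centropy.
have HS : h (jointRV G' (jointRV Y Z)) + h (jointRV G Z) <=
      h (jointRV G' Z) + h (jointRV G (jointRV Y Z)).
  apply: (@submod _ _ _ _ hP hq _ _ _ _ (jointRV G' (jointRV Y Z))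
    (jointRV G' Z) (jointRV G (jointRV Y Z)) (jointRV G Z)).
  - by depT.
  - move=> w w' e; move: (e); rewrite /jointRV => -[e1 e2 e3]; by rewrite (dG _ _ e1) e2 e3.
  - by move=> w w' e1 e2; move: e1 e2; rewrite /jointRV => -[e1 e2] [_ e3 _]; rewrite e1 e2 e3.
  - move=> w w' e; move: (e); rewrite /jointRV => -[e1 e2]; by rewrite (dG _ _ e1) e2.
  - by depT.
lra.
Qed.

Lemma cmi_chain (T1 T2 T3 T4 : finType) (G1 : Omega -> T1) (G : Omega -> T4)
  (Y : Omega -> T2) (Z : Omega -> T3) :
  cmi G Y Z <= cmi G1 Y Z + cmi G Y (jointRV G1 Z).
Proof.
apply: (le_trans (cmi_dp Y Z (@dep_jr _ _ _ G1 G))).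
rewrite /cmutinfo /centropy.
rewrite (@h_eq _ _ _ _ hP hq _ _ (jointRV (jointRV G1 G) Z) (jointRV G (jointRV G1 Z))); try depT.
rewrite (@h_eq _ _ _ _ hP hq _ _ (jointRV (jointRV G1 G) (jointRV Y Z))
   (jointRV G (jointRV Y (jointRV G1 Z)))); try depT.
rewrite (@h_eq _ _ _ _ hP hq _ _ (jointRV G1 (jointRV Y Z)) (jointRV Y (jointRV G1 Z))); try depT.
lra.
Qed.

Lemma mi_sym_le (T1 T2 T3 : finType) (X : Omega -> T1) (G : Omega -> T2)
   (Rr : Omega -> T3) : ch X Rr - ch X (jointRV G Rr) <= ch G Rr.
Proof.
have m : h (jointRV X Rr) <= h (jointRV X (jointRV G Rr)) by apply: h_mono => //; depT.
move: m; rewrite /centropy; lra.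
Qed.

Lemma ch_chain (T1 T2 T3 : finType) (X : Omega -> T1) (Y : Omega -> T2)
   (Z : Omega -> T3) : ch (jointRV X Y) Z = ch X (jointRV Y Z) + ch Y Z.
Proof.
rewrite /centropy (@h_eq _ _ _ _ hP hq _ _ (jointRV (jointRV X Y) Z)
  (jointRV X (jointRV Y Z))); try depT.
lra.
Qed.

Lemma coll_set0 (I : finType) (T1 : Type) (f : I -> Omega -> T1) w w' :
  coll set0 f w = coll set0 f w'.
Proof. by apply/ffunP => i; rewrite !ffunE inE. Qed.

Lemma coll_split_l (I : finType) (T1 : Type) (A : {set I}) (f : I -> Omega -> T1) a :
  a \in A -> dep (coll A f) (jointRV (f a) (coll (A :\ a) f)).
Proof.
move=> aA; apply: dep_coll => i iA; case: (i =P a) => [->|ne]; first exact: dep_jl.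
apply: (dep_trans _ (@dep_jr _ _ _ (f a) (coll (A :\ a) f))); apply: dep_coll_elem.
by rewrite !inE iA andbT; apply/eqP.
Qed.

Lemma coll_split_r (I : finType) (T1 : Type) (A : {set I}) (f : I -> Omega -> T1) a :
  a \in A -> dep (jointRV (f a) (coll (A :\ a) f)) (coll A f).
Proof.
move=> aA; apply: dep_joint; first exact: dep_coll_elem.
by apply: dep_coll_sub; apply: subD1set.
Qed.

Lemma h_subadd (I : finType) (T1 T2 : finType) (A : {set I}) (f : I -> Omega -> T1)
   (Y : Omega -> T2) : h (jointRV (coll A f) Y) <= \sum_(i in A) h (f i) + h Y.
Proof.
move: {2}#|A| (erefl #|A|) => n; elim: n A => [|n IH] A cA.
  move/eqP: cA; rewrite cards_eq0 => /eqP ->; rewrite big_set0 add0r.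
  rewrite (@h_eq _ _ _ _ hP hq _ _ (jointRV (coll set0 f) Y) Y) //.
    apply: dep_joint; last exact: dep_refl.
    by apply: dep_const; apply: coll_set0.
  exact: dep_jr.
have [a aA] : exists a, a \in A by apply/set0Pn; rewrite -card_gt0 cA.
rewrite (bigD1 a) //=.
rewrite (@h_eq _ _ _ _ hP hq _ _ (jointRV (coll A f) Y)
   (jointRV (f a) (jointRV (coll (A :\ a) f) Y))) //; first last.
- apply: dep_joint.
    exact: (dep_trans (dep_coll_elem (f:=f) aA) (@dep_jl _ _ _ (coll A f) Y)).
  apply: dep_joint; last exact: dep_jr.
  exact: (dep_trans (dep_coll_sub (f:=f) (subD1set A a)) (@dep_jl _ _ _ (coll A f) Y)).
- apply: dep_joint; last by depT.
  apply: (dep_trans (coll_split_l (f:=f) aA)); depT.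
have c1 : #|A :\ a| = n by rewrite (cardsD1 a A) aA in cA; case: cA.
have := IH _ c1; have := h_sub (f a) (jointRV (coll (A :\ a) f) Y).
have -> : \sum_(i in A :\ a) h (f i) = \sum_(i in A | i != a) h (f i).
  by apply: eq_bigl => i; rewrite !inE andbC.
lra.
Qed.

Lemma chain_lb (I : finType) (T1 T2 : finType) (f : I -> Omega -> T1) (Cc : Omega -> T2)
   (B : {set I}) (lb : R) :
  (forall a (B' : {set I}), a \in B -> B' \subset B -> a \notin B' ->
       lb <= ch (f a) (jointRV (coll B' f) Cc)) ->
  #|B|%:R * lb <= ch (coll B f) Cc.
Proof.
move=> H.
suff: forall B0 : {set I}, B0 \subset B -> #|B0|%:R * lb <= ch (coll B0 f) Cc by apply.
move=> B0; move: {2}#|B0| (erefl #|B0|) => n; elim: n B0 => [|n IH] B0 cB sB.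
  rewrite cB mul0r det_dep //; apply: dep_const; move/eqP: cB; rewrite cards_eq0 => /eqP ->.
  exact: coll_set0.
have [a aB] : exists a, a \in B0 by apply/set0Pn; rewrite -card_gt0 cB.
have c1 : #|B0 :\ a| = n by rewrite (cardsD1 a B0) aB in cB; case: cB.
rewrite (@ch_eqv _ _ _ _ (coll B0 f) (jointRV (f a) (coll (B0 :\ a) f)) Cc Cc);
  try exact: dep_refl; [|exact: coll_split_l|exact: coll_split_r].
rewrite ch_chain.
have h1 := IH _ c1 (subset_trans (subD1set B0 a) sB).
have h2 : lb <= ch (f a) (jointRV (coll (B0 :\ a) f) Cc).
  apply: H; first exact: (subsetP sB).
  - exact: subset_trans (subD1set B0 a) sB.
  - by rewrite !inE eqxx.
rewrite c1 in h1; rewrite cB -add1n natrD mulrDl mul1r; lra.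
Qed.

End Shannon.

Section Main.
Variables (R : realType) (Omega : finType) (P : Omega -> R)
  (F : finFieldType) (L U : nat) (V : 'I_U -> nat)
  (M N : nat) (S : 'I_M -> {set user V}) (T : 'I_N -> {set user V})
  (TZS TZ TX TY : finType)
  (W : user V -> Omega -> 'rV[F]_L) (ZS : Omega -> TZS)
  (Z : user V -> Omega -> TZ) (X : user V -> Omega -> TX)
  (Y : 'I_U -> Omega -> TY).
Hypothesis hWS : WS_HSA P S T W ZS Z X Y.

Let q : R := #|F|%:R.
Local Notation h := (entropy q P).
Local Notation ch := (centropy q P).
Local Notation cmi := (cmutinfo q P).
Local Notation Wsum := (fun w => \sum_(k : user V) W k w).
Local Notation Rest a := (jointRV (coll (~: [set a]) W) (coll (~: [set a]) Z)).

Lemma hq : 1 < q.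
Proof. by rewrite /q ltr1n card_finNzRing_gt1. Qed.

Lemma hP : is_prob P. Proof. by case: hWS. Qed.

Lemma WS_parts :
  [/\ (forall k x, prob_eq P (W k) x = ((#|F| ^ L)%N%:R)^-1),
      h (jointRV (coll setT W) (coll setT Z)) =
        \sum_(k : user V) h (W k) + h (coll setT Z),
      (forall k, ch (X k) (jointRV (W k) (Z k)) = 0),
      (forall u, ch (Y u) (coll (Kset V u) X) = 0) &
      [/\ ch Wsum (coll setT Y) = 0,
      (forall m n, cmi (coll setT Y) (coll (S m) W)
          (jointRV Wsum (jointRV (coll (T n) W) (coll (T n) Z))) = 0) &
      (forall u m n, cmi (coll (Kset V u) X) (coll (S m) W)
          (jointRV (coll (T n) W) (coll (T n) Z)) = 0)]].
Proof.
by case: hWS => _ [hu [hi [_ [hiii [hiv [hv [hvi hvii]]]]]]].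
Qed.

Lemma card_rV : #|'rV[F]_L| = (#|F| ^ L)%N.
Proof. by rewrite card_mx mul1n. Qed.

Lemma lnqL : ln ((#|F| ^ L)%N%:R : R) / ln q = L%:R.
Proof.
have q0 : 0 < q by apply: lt_trans hq.
rewrite natrX -/q lnXn // -[ln q *+ L]mulr_natr.
have lq : 0 < ln q by apply: ln_gt0; exact: hq.
by field; rewrite gt_eqF.
Qed.

Lemma hW a : h (W a) = L%:R.
Proof.
case: WS_parts => hu _ _ _ _.
rewrite (h_uniform hP hq) ?card_rV ?lnqL //.
Qed.

Lemma hWsum_le : h Wsum <= L%:R.
Proof. by have := h_le_card hP hq Wsum; rewrite card_rV lnqL. Qed.

Lemma dep_all_split (T1 : Type) (T2 : Type) (f : user V -> Omega -> T1) a (Q : Omega -> T2) :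
  dep (f a) Q -> dep (coll (~: [set a]) f) Q -> dep (coll setT f) Q.
Proof.
move=> d1 d2; apply: dep_coll => k _; case: (k =P a) => [->//|ne].
apply: (dep_trans _ d2); apply: dep_coll_elem; rewrite !inE; exact/eqP.
Qed.

Lemma detXk k a : k != a -> ch (X k) (Rest a) = 0.
Proof.
case: WS_parts => _ _ hiii _ _ ka.
apply: (det_trans hP hq (hiii k)); apply: (det_dep hP hq).
have kin : k \in ~: [set a] by rewrite !inE.
apply: dep_joint.
  exact: (dep_trans (dep_coll_elem (f:=W) kin) (@dep_jl _ _ _ _ (coll (~: [set a]) Z))).
exact: (dep_trans (dep_coll_elem (f:=Z) kin) (@dep_jr _ _ _ (coll (~: [set a]) W) _)).
Qed.

Lemma detYu u' a : tag a != u' -> ch (Y u') (Rest a) = 0.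
Proof.
case: WS_parts => _ _ _ hiv _ ne.
apply: (det_trans hP hq (hiv u')); apply: (det_coll hP hq) => k.
rewrite inE => /eqP tk; apply: detXk; apply/eqP => eka.
by move: ne; rewrite -eka tk eqxx.
Qed.

Lemma depWa a (T2 : finType) (Q : Omega -> T2) :
  dep (W a) (jointRV Wsum (jointRV Q (Rest a))).
Proof.
move=> w w'; rewrite /jointRV => -[e1 _ e2 _].
have E : \sum_(k | k != a) W k w = \sum_(k | k != a) W k w'.
  apply: eq_bigr => k ka; apply: (coll_eqP e2); by rewrite !inE.
by move: e1; rewrite (bigD1 a) //= [X in _ = X](bigD1 a) //= E => /addIr.
Qed.

Lemma detWa a (T2 : finType) (Q : Omega -> T2) :
  (forall u', ch (Y u') (jointRV Q (Rest a)) = 0) -> ch (W a) (jointRV Q (Rest a)) = 0.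
Proof.
case: WS_parts => _ _ _ _ [hv _ _] H.
have d1 : ch (coll setT Y) (jointRV Q (Rest a)) = 0 by apply: (det_coll hP hq) => u' _.
have d2 := det_trans hP hq hv d1.
apply: (det_trans hP hq (det_dep hP hq (@depWa a _ Q))).
apply: (det_joint hP hq d2); apply: (det_dep hP hq); exact: dep_refl.
Qed.

Lemma hWa_rest a : L%:R <= ch (W a) (Rest a).
Proof.
case: WS_parts => _ hi _ _ _.
apply: (le_trans _ (ch_mono_cond hP hq (W a) (@dep_jl _ _ _ (Rest a) (Z a)))).
rewrite /centropy.
have e1 : h (jointRV (W a) (jointRV (Rest a) (Z a))) =
          h (jointRV (coll setT W) (coll setT Z)).
  apply: (h_eq hP hq).
    apply: dep_joint.
      exact: (dep_trans (dep_coll_elem (f:=W) (in_setT a)) (@dep_jl _ _ _ _ (coll setT Z))).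
    apply: dep_joint; first apply: dep_joint.
    - exact: (dep_trans (dep_coll_sub (f:=W) (subsetT _)) (@dep_jl _ _ _ _ (coll setT Z))).
    - exact: (dep_trans (dep_coll_sub (f:=Z) (subsetT _)) (@dep_jr _ _ _ (coll setT W) _)).
    - exact: (dep_trans (dep_coll_elem (f:=Z) (in_setT a)) (@dep_jr _ _ _ (coll setT W) _)).
  apply: dep_joint; apply: (dep_all_split (a:=a)); try by depT.
  - move=> w w' e; move: e; rewrite /jointRV => -[_ e _ _]; exact: e.
have e2 : h (jointRV (Rest a) (Z a)) = h (jointRV (coll (~: [set a]) W) (coll setT Z)).
  apply: (h_eq hP hq).
    apply: dep_joint; first apply: dep_joint.
    - exact: dep_jl.
    - exact: (dep_trans (dep_coll_sub (f:=Z) (subsetT _)) (@dep_jr _ _ _ (coll (~: [set a]) W) _)).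
    - exact: (dep_trans (dep_coll_elem (f:=Z) (in_setT a)) (@dep_jr _ _ _ (coll (~: [set a]) W) _)).
  apply: dep_joint; first by depT.
  apply: (dep_all_split (a:=a)); depT.
have e3 := h_subadd hP hq (~: [set a]) W (coll setT Z).
have e4 : \sum_(k : user V) h (W k) = h (W a) + \sum_(k in ~: [set a]) h (W k).
  rewrite (bigD1 a) //=; congr (_ + _); apply: eq_bigl => k; by rewrite !inE.
rewrite e1 e2 hi e4 hW in e3 *; lra.
Qed.

Lemma KL a (T2 : finType) (G : Omega -> T2) :
  ch (W a) (jointRV G (Rest a)) = 0 -> L%:R <= ch G (Rest a).
Proof.
move=> d; have := mi_sym_le hP hq (W a) G (Rest a); have := hWa_rest a.
rewrite d; lra.
Qed.

Lemma depWa' a : dep (W a) (jointRV Wsum (Rest a)).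
Proof.
move=> w w'; rewrite /jointRV => -[e1 e2 _].
have E : \sum_(k | k != a) W k w = \sum_(k | k != a) W k w'.
  apply: eq_bigr => k ka; apply: (coll_eqP e2); by rewrite !inE.
by move: e1; rewrite (bigD1 a) //= [X in _ = X](bigD1 a) //= E => /addIr.
Qed.

Lemma detY_Xa a u' : ch (Y u') (jointRV (X a) (Rest a)) = 0.
Proof.
case: WS_parts => _ _ _ hiv _.
case: (tag a =P u') => [<-|ne]; last first.
  by apply: (det_mono hP hq (detYu (introN eqP ne))); exact: dep_jr.
apply: (det_trans hP hq (hiv (tag a))); apply: (det_coll hP hq) => k _.
case: (k =P a) => [->|ne]; first by apply: (det_dep hP hq); exact: dep_jl.
apply: (det_mono hP hq (detXk (introN eqP ne))); exact: dep_jr.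
Qed.

Lemma detY_Yu a u' u'' : tag a = u' -> ch (Y u'') (jointRV (Y u') (Rest a)) = 0.
Proof.
move=> ta; case: (u'' =P u') => [->|ne].
  by apply: (det_dep hP hq); exact: dep_jl.
apply: (det_mono hP hq (detYu _)); last exact: dep_jr.
by rewrite ta; apply/eqP => e; apply: ne.
Qed.

Lemma depC n a : a \notin T n ->
  dep (jointRV (coll (T n) W) (coll (T n) Z)) (Rest a).
Proof.
move=> aT; have sT : T n \subset ~: [set a].
  apply/subsetP => k kT; rewrite !inE; apply/eqP => e; by rewrite -e kT in aT.
apply: dep_joint.
  exact: (dep_trans (dep_coll_sub (f:=W) sT) (@dep_jl _ _ _ _ (coll (~: [set a]) Z))).
exact: (dep_trans (dep_coll_sub (f:=Z) sT) (@dep_jr _ _ _ (coll (~: [set a]) W) _)).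
Qed.

Lemma partA (hSc : subset_closed S) u m n : S m :&: T n = set0 ->
  #|S m :&: Kset V u|%:R * L%:R <= ch (coll (S m :&: Kset V u) Z) (coll (T n) Z).
Proof.
move=> hST; case: WS_parts => _ _ hiii _ [_ _ hvii].
set A := S m :&: Kset V u.
set C := jointRV (coll (T n) W) (coll (T n) Z).
have notT : forall k, k \in A -> k \notin T n.
  move=> k; rewrite inE => /andP[kS _]; apply/negP => kT.
  have : k \in S m :&: T n by rewrite inE kS kT.
  by rewrite hST inE.
have chainA : #|A|%:R * L%:R <= ch (coll A X) C.
  apply: (chain_lb hP hq) => a B' aA sB aB.
  apply: (le_trans _ (ch_det_cond hP hq (X a) (G := jointRV (coll B' X) C) (Rr := Rest a) _)).
    apply: KL; apply: detWa => u'; exact: detY_Xa.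
  apply: (det_joint hP hq); last by apply: (det_dep hP hq); apply: depC; apply: notT.
  apply: (det_coll hP hq) => k kB; apply: detXk; apply/eqP => e; by rewrite -e kB in aB.
have sec : cmi (coll A X) (coll A W) C = 0.
  have [m' hm'] := hSc m A (subsetIl _ _).
  have h0 := hvii u m' n; rewrite hm' in h0.
  apply/eqP; rewrite eq_le (cmi_ge0 hP hq) andbT -h0 /C; apply: (cmi_dp hP hq).
  apply: dep_coll_sub; exact: subsetIr.
have step2 : ch (coll A X) (jointRV (coll A W) C) <= ch (coll A Z) (jointRV (coll A W) C).
  apply: (ch_det_left hP hq); apply: (det_coll hP hq) => k kA.
  apply: (det_trans hP hq (hiii k)); apply: (det_dep hP hq); apply: dep_joint.
    apply: (dep_trans (dep_coll_elem (f:=W) kA)); depT.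
  apply: (dep_trans (dep_coll_elem (f:=Z) kA)); depT.
have step3 : ch (coll A Z) (jointRV (coll A W) C) <= ch (coll A Z) (coll (T n) Z).
  by apply: (ch_mono_cond hP hq); rewrite /C; depT.
move: sec; rewrite /cmutinfo => sec; lra.
Qed.

Lemma partB (hSc : subset_closed S) m n : S m :&: T n = set0 ->
  (if #|KUset V (Uset (S m) (T n)) :|: T n| == #|user V|
     then ch (coll (KUset V (Uset (S m) (T n))) Z) (coll (T n) Z)
            >= (#|Uset (S m) (T n)|%:R - 1) * L%:R
     else ch (coll (KUset V (Uset (S m) (T n))) Z) (coll (T n) Z)
            >= #|Uset (S m) (T n)|%:R * L%:R).
Proof.
move=> hST; set Us := Uset (S m) (T n); case: WS_parts => _ _ hiii hiv [_ hvi _].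
set KU := KUset V Us.
set S' := S m :&: KU.
set C := jointRV (coll (T n) W) (coll (T n) Z).
have notT : forall k, k \in S m -> k \notin T n.
  move=> k kS; apply/negP => kT.
  have : k \in S m :&: T n by rewrite inE kS kT.
  by rewrite hST inE.
have memUs : forall u', u' \in Us ->
    (exists2 a, a \in S m & tag a = u') /\ Kset V u' \subset S m :|: T n.
  move=> u'; rewrite inE => /andP[/set0Pn[a] ha hs]; split => //.
  move: ha; rewrite !inE => /andP[aS /eqP ta]; by exists a.
have inKU : forall u' k, u' \in Us -> k \in Kset V u' -> k \in KU.
  by move=> u' k uU kK; apply/bigcupP; exists u'.
have chainB : #|Us|%:R * L%:R <= ch (coll Us Y) C.
  apply: (chain_lb hP hq) => u' B' uU sB uB.
  have [[a aS ta] _] := memUs u' uU.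
  apply: (le_trans _ (ch_det_cond hP hq (Y u') (G := jointRV (coll B' Y) C) (Rr := Rest a) _)).
    apply: KL; apply: detWa => u''; exact: detY_Yu.
  apply: (det_joint hP hq); last by apply: (det_dep hP hq); apply: depC; apply: notT.
  apply: (det_coll hP hq) => u'' uB'; apply: detYu; rewrite ta.
  by apply/eqP => e; rewrite e uB' in uB.
have sec : cmi (coll Us Y) (coll S' W) C <= cmi Wsum (coll S' W) C.
  have [m' hm'] := hSc m S' (subsetIl _ _).
  have h0 := hvi m' n; rewrite hm' in h0.
  have c1 := cmi_chain hP hq Wsum (coll Us Y) (coll S' W) C.
  have c2 : cmi (coll Us Y) (coll S' W) (jointRV Wsum C) <= 0.
    rewrite -h0; apply: (cmi_dp hP hq); apply: dep_coll_sub; exact: subsetT.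
  lra.
have step2 : ch (coll Us Y) (jointRV (coll S' W) C) <= ch (coll KU Z) (jointRV (coll S' W) C).
  apply: (ch_det_left hP hq); apply: (det_coll hP hq) => u' uU.
  apply: (det_trans hP hq (hiv u')); apply: (det_coll hP hq) => k kK.
  apply: (det_trans hP hq (hiii k)); apply: (det_dep hP hq); apply: dep_joint.
    have [_ /subsetP sub] := memUs u' uU.
    move: (sub k kK); rewrite inE => /orP[kS|kT].
      have kS' : k \in S' by rewrite inE kS (inKU u').
      apply: (dep_trans (dep_coll_elem (f:=W) kS')); depT.
    apply: (dep_trans (dep_coll_elem (f:=W) kT)); rewrite /C; depT.
  apply: (dep_trans (dep_coll_elem (f:=Z) (inKU u' k uU kK))); depT.
have step3 : ch (coll KU Z) (jointRV (coll S' W) C) <= ch (coll KU Z) (coll (T n) Z).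
  by apply: (ch_mono_cond hP hq); rewrite /C; depT.
have dle : cmi Wsum (coll S' W) C <= L%:R.
  have := ch_le_h hP hq Wsum C; have := hWsum_le.
  have := ch_ge0 hP hq Wsum (jointRV (coll S' W) C); rewrite /cmutinfo; lra.
rewrite /cmutinfo in sec dle.
case: ifP => hc.
  rewrite mulrBl mul1r; lra.
have [k0 hk0] : exists k0, k0 \notin KU :|: T n.
  case: (pickP (fun k => k \notin KU :|: T n)) => [k0 hk0|none]; first by exists k0.
  have : KU :|: T n = setT.
    by apply/setP => k; rewrite in_setT; move: (none k) => /negbFE.
  by move=> e; move: hc; rewrite e cardsT eqxx.
move: hk0; rewrite inE negb_or => /andP[k0U k0T].
have dle0 : ch Wsum C <= ch Wsum (jointRV (coll S' W) C).
  have l1 : ch Wsum C <= L%:R by apply: le_trans (ch_le_h hP hq Wsum C) hWsum_le.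
  apply: (le_trans l1); apply: (le_trans (KL (det_dep hP hq (@depWa' k0)))).
  apply: (ch_mono_cond hP hq); apply: dep_joint; last exact: depC.
  have sS : S' \subset ~: [set k0].
    apply/subsetP => k; rewrite !inE => /andP[_ kU]; apply/eqP => e.
    by rewrite -e kU in k0U.
  exact: (dep_trans (dep_coll_sub (f:=W) sS) (@dep_jl _ _ _ _ (coll (~: [set k0]) Z))).
lra.
Qed.

End Main.

Unset Implicit Arguments.
Set Strict Implicit.

Theorem lemma3 (R : realType) (Omega : finType) (P : Omega -> R)
  (F : finFieldType) (L U : nat) (V : 'I_U -> nat)
  (M N : nat) (S : 'I_M -> {set user V}) (T : 'I_N -> {set user V})
  (TZS TZ TX TY : finType)
  (W : user V -> Omega -> 'rV[F]_L) (ZS : Omega -> TZS)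
  (Z : user V -> Omega -> TZ) (X : user V -> Omega -> TX)
  (Y : 'I_U -> Omega -> TY) :
  (2 <= U)%N ->
  (forall u, 0 < V u)%N ->
  subset_closed S -> subset_closed T ->
  WS_HSA P S T W ZS Z X Y ->
  forall (u : 'I_U) (m : 'I_M) (n : 'I_N),
    S m :&: T n = set0 ->
    (#|(S m :&: Kset V u) :|: T n| <= #|user V| - 1)%N ->
    let q : R := #|F|%:R in
    let Us := Uset (S m) (T n) in
    (centropy q P (coll (S m :&: Kset V u) Z) (coll (T n) Z)
       >= #|S m :&: Kset V u|%:R * L%:R)
    /\
    (if #|KUset V Us :|: T n| == #|user V|
     then centropy q P (coll (KUset V Us) Z) (coll (T n) Z)
            >= (#|Us|%:R - 1) * L%:R
     else centropy q P (coll (KUset V Us) Z) (coll (T n) Z)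
            >= #|Us|%:R * L%:R).
Proof.
move=> _ _ hSc _ hWS u m n hST _ q Us; split.
  exact: (partA hWS hSc u hST).
exact: (partB hWS hSc hST).
Qed.
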